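(* If $k\ge4$, then in the setting of the context, $0<\lim_{p\to\infty}\gamma_p(k)\le 3$.
   Context: For integers $k\ge2$, $n\ge1$ and $x\in\mathbb R$: $P_{n,k}(x)=\left(1+\frac{x^{n-1}}{2}\right)^{k+1}-\left(1-\frac{x^{n-1}}{2}\right)^{k+1}$, and for $n>k$: $Q_{n,k}(x)=(k+1)x^{n-k}$. Fix an integer $k\ge2$ and, for each integer $n>k$, an arbitrary $\xi(k;n)\in(0,1)$ with $P_{n,k}(\xi(k;n))=Q_{n,k}(\xi(k;n))$. Let $\alpha=\limsup_{n\to\infty}\xi(k;n)^{n-1}$ and let $(n_p)_{p\in\mathbb N}$ be a strictly increasing sequence of integers $>k$ with $\xi(k;n_p)^{n_p-1}\to\alpha$. For $n>k$ put $$C_n(k)=\frac{\xi(k;n)^{3n-k-2}}{\frac{1}{k+2}\left[\left(1+\frac{\xi(k;n)^{n-1}}{2}\right)^{k+2}-\left(1-\frac{\xi(k;n)^{n-1}}{2}\right)^{k+2}\right]-\xi(k;n)^{n-k}},$$ and $\gamma_p(k)=C_{n_p}(k)$ for $p\in\mathbb N$. *)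

(* Defs.v *)
From Stdlib Require Import Reals Lra Lia.
Open Scope R_scope.

Definition Pnk (n k : nat) (x : R) : R :=
  (1 + x ^ (n - 1) / 2) ^ (k + 1) - (1 - x ^ (n - 1) / 2) ^ (k + 1).

(* Q_{n,k}(x) = (k+1) x^{n-k}, used for n > k *)
Definition Qnk (n k : nat) (x : R) : R := INR (k + 1) * x ^ (n - k).

(* C_n(k) evaluated at the chosen root xi = xi(k;n) *)
Definition Cn (n k : nat) (xi : R) : R :=
  xi ^ (3 * n - k - 2) /
  (/ INR (k + 2) *
     ((1 + xi ^ (n - 1) / 2) ^ (k + 2) - (1 - xi ^ (n - 1) / 2) ^ (k + 2))
   - xi ^ (n - k)).

Definition is_limsup (u : nat -> R) (l : R) : Prop :=
  (forall eps, 0 < eps -> exists N, forall n, (N <= n)%nat -> u n < l + eps) /\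
  (forall eps, 0 < eps -> forall N, exists n, (N <= n)%nat /\ l - eps < u n).

(* Main.v *)
Require Import Defs.
From Stdlib Require Import Reals Lra Lia.
From Coquelicot Require Import Coquelicot.
Open Scope R_scope.
Definition A (m : nat) (y : R) := (1 + y/2)^m - (1 - y/2)^m.
Definition B (m : nat) (y : R) := (1 + y/2)^m + (1 - y/2)^m.
Definition cc (m : nat) := INR m * (INR m - 1) * (INR m - 2) / 24.
Definition dd (m : nat) := INR m * (INR m - 1) / 4.

Lemma A_rec m y : A (S m) y = A m y + y/2 * B m y.
Proof. unfold A, B; simpl; ring. Qed.
Lemma B_rec m y : B (S m) y = B m y + y/2 * A m y.
Proof. unfold A, B; simpl; ring. Qed.
Lemma cc_rec m : cc (S m) = cc m + dd m / 2.
Proof. unfold cc, dd; rewrite S_INR; field. Qed.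
Lemma dd_rec m : dd (S m) = dd m + INR m / 2.
Proof. unfold dd; rewrite S_INR; field. Qed.
Lemma cc_ge0 m : 0 <= cc m.
Proof. unfold cc. destruct m as [|[|m]].
 - simpl; lra. - simpl; lra.
 - rewrite !S_INR. pose proof (pos_INR m). 
   apply Rmult_le_pos; [|lra]. apply Rmult_le_pos; [apply Rmult_le_pos|]; lra.
Qed.

Lemma AB_bounds m : exists K J, 0 <= K /\ 0 <= J /\ forall y, 0 <= y <= 1 ->
  (INR m * y + cc m * y^3 <= A m y <= INR m * y + cc m * y^3 + K * y^5) /\
  (2 + dd m * y^2 <= B m y <= 2 + dd m * y^2 + J * y^4).
Proof.
  induction m as [|m IH].
  - exists 0, 0. split; [lra|split;[lra|]]. intros y Hy.
    unfold A, B, cc, dd; simpl; lra.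
  - destruct IH as [K [J [HK [HJ H]]]].
    exists (K + J/2), (J + cc m / 2 + K / 2).
    pose proof (cc_ge0 m) as Hc.
    split; [lra|split;[lra|]]. intros y Hy.
    destruct (H y Hy) as [[A1 A2] [B1 B2]].
    rewrite A_rec, B_rec, cc_rec, dd_rec, S_INR.
    assert (Hy2 : 0 <= y/2) by lra.
    pose proof (Rmult_le_compat_l _ _ _ Hy2 A1) as a1.
    pose proof (Rmult_le_compat_l _ _ _ Hy2 A2) as a2.
    pose proof (Rmult_le_compat_l _ _ _ Hy2 B1) as b1.
    pose proof (Rmult_le_compat_l _ _ _ Hy2 B2) as b2.
    assert (y6 : y^6 <= y^4).
    { replace (y^6) with (y^4 * (y*y)) by ring.
      assert (0 <= y^4) by (apply pow_le; lra).
      assert (y*y <= 1) by nra. nra. }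
    assert (y4 : 0 <= y^4) by (apply pow_le; lra).
    assert (0 <= cc m * y^4) by (apply Rmult_le_pos; lra).
    split; split; nra.
Qed.
Lemma lim_quad (a b : R) (y : nat -> R) : is_lim_seq y 0 -> is_lim_seq (fun p => a + b * (y p)^2) a.
Proof.
  intros Hy.
  assert (H2 : is_lim_seq (fun p => y p * y p) 0).
  { eapply is_lim_seq_mult; [exact Hy|exact Hy|]. unfold is_Rbar_mult; simpl; first [f_equal; ring | f_equal; f_equal; ring]. }
  assert (H3 : is_lim_seq (fun p => b * (y p * y p)) 0).
  { replace (Finite 0) with (Rbar_mult b 0) by (simpl; f_equal; ring). apply is_lim_seq_scal_l; exact H2. }
  apply is_lim_seq_ext with (u := fun n => a + b * (y n * y n)); [| eapply is_lim_seq_plus; [apply is_lim_seq_const | exact H3 | ]].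
  - intros n; simpl; ring.
  - unfold is_Rbar_plus; simpl; first [f_equal; ring | f_equal; f_equal; ring].
Qed.
Lemma div_bounds lo hi x a : 0 < a -> lo * a <= x <= hi * a -> lo <= x / a <= hi.
Proof. intros Ha [H1 H2]. split.
 - apply Rmult_le_reg_r with a; auto. unfold Rdiv. rewrite Rmult_assoc, Rinv_l; lra.
 - apply Rmult_le_reg_r with a; auto. unfold Rdiv. rewrite Rmult_assoc, Rinv_l; lra.
Qed.
Lemma bern x m : 0 <= x <= 1 -> 1 - INR m * x <= (1-x)^m.
Proof. intros Hx. induction m. simpl; lra. rewrite S_INR. simpl. assert (0 <= 1 - x) by lra. pose proof (Rmult_le_compat_l _ _ _ H IHm). pose proof (pos_INR m). nra. Qed.
Lemma pow_le1 x m : 0 <= x <= 1 -> x^m <= 1.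
Proof. intros Hx. induction m; simpl; nra. Qed.

Lemma per_n k n x : (k < n)%nat -> (4 <= k)%nat -> 0 < x < 1 -> Pnk n k x = Qnk n k x ->
  0 < x^(n-1) <= 1 /\ 0 < x^(n-k) <= 1 /\ INR (k+1) * x^(n-k) = A (k+1) (x^(n-1)) /\
  x^(n-1) = x^(n-k) * x^(k-1) /\
  Cn n k x = (A (k+1) (x^(n-1)) / (INR (k+1) * x^(n-1))) /
     ((A (k+2) (x^(n-1)) / INR (k+2) - A (k+1) (x^(n-1)) / INR (k+1)) / (x^(n-1))^3).
Proof.
  intros Hkn Hk Hx HP.
  assert (Hy : 0 < x^(n-1) <= 1) by (split; [apply pow_lt; lra | apply pow_le1; lra]).
  assert (Ht : 0 < x^(n-k) <= 1) by (split; [apply pow_lt; lra | apply pow_le1; lra]).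
  assert (HQ : INR (k+1) * x^(n-k) = A (k+1) (x^(n-1))).
  { unfold Pnk, Qnk in HP. unfold A. lra. }
  assert (Hs : x^(n-1) = x^(n-k) * x^(k-1)).
  { rewrite <- pow_add. f_equal. lia. }
  do 4 (split; [assumption|]).
  assert (HN : x ^ (3*n-k-2) = (x^(n-1))^2 * x^(n-k)).
  { rewrite <- pow_mult, <- pow_add. f_equal. lia. }
  unfold Cn. rewrite HN.
  set (y := x^(n-1)) in *. set (t := x^(n-k)) in *.
  change ((1 + y / 2) ^ (k + 2) - (1 - y / 2) ^ (k + 2)) with (A (k+2) y).
  assert (m1 : 0 < INR (k+1)) by (apply lt_0_INR; lia).
  assert (m2 : 0 < INR (k+2)) by (apply lt_0_INR; lia).
  assert (Et : t = A (k+1) y / INR (k+1)) by (rewrite <- HQ; field; lra).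
  rewrite Et.
  destruct (Req_dec (A (k+2) y / INR (k+2) - A (k+1) y / INR (k+1)) 0) as [D0|D0].
  - replace (/ INR (k + 2) * A (k + 2) y - A (k + 1) y / INR (k + 1)) with 0 by (rewrite <- D0; field; lra).
    rewrite D0. unfold Rdiv. rewrite Rmult_0_l, !Rinv_0, !Rmult_0_r. reflexivity.
  - field. split; [lra|split; [lra|split; [lra|]]]. intro E; apply D0. replace (A (k+2) y / INR (k+2) - A (k+1) y / INR (k+1)) with ((A (k + 2) y * INR (k + 1) - A (k + 1) y * INR (k + 2)) / (INR (k+2) * INR (k+1))) by (field; lra). rewrite E. unfold Rdiv; ring.
Qed.

Lemma np_ge (np : nat -> nat) : (forall p, (np p < np (S p))%nat) -> forall p, (p <= np p)%nat.
Proof. intros H p; induction p; [lia|]. specialize (H p); lia. Qed.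

Theorem corollary5p7 (k : nat) (hk : (4 <= k)%nat)
  (xi : nat -> R)
  (hxi : forall n : nat, (k < n)%nat ->
     0 < xi n < 1 /\ Pnk n k (xi n) = Qnk n k (xi n))
  (alpha : R)
  (halpha : is_limsup (fun n => xi n ^ (n - 1)) alpha)
  (np : nat -> nat)
  (hnp_inc : forall p, (np p < np (S p))%nat)
  (hnp_gt : forall p, (k < np p)%nat)
  (hnp_cv : Un_cv (fun p => xi (np p) ^ (np p - 1)) alpha) :
  exists L : R,
    Un_cv (fun p => Cn (np p) k (xi (np p))) L /\ 0 < L <= 3.
Proof.
  pose proof (np_ge np hnp_inc) as Hge.
  pose proof (fun p => per_n k (np p) (xi (np p)) (hnp_gt p) hk
     (proj1 (hxi _ (hnp_gt p))) (proj2 (hxi _ (hnp_gt p)))) as F.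
  destruct (AB_bounds (k+1)) as [K1 [J1 [HK1 [HJ1 HB1]]]].
  destruct (AB_bounds (k+2)) as [K2 [J2 [HK2 [HJ2 HB2]]]].
  assert (m1 : 0 < INR (k+1)) by (apply lt_0_INR; lia).
  assert (m2 : 0 < INR (k+2)) by (apply lt_0_INR; lia).
  assert (mk1 : 0 < INR (k-1)) by (apply lt_0_INR; lia).
  assert (Hk4 : 4 <= INR k) by (replace 4 with (INR 4) by (simpl; lra); apply le_INR; exact hk).
  set (c1 := cc (k+1)).
  assert (c1pos : 0 < c1).
  { unfold c1, cc. rewrite plus_INR. simpl INR.
    apply Rmult_lt_0_compat; [|lra]. apply Rmult_lt_0_compat; [apply Rmult_lt_0_compat|]; lra. }
  set (y := fun p => xi (np p) ^ (np p - 1)).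
  assert (Halpha : alpha = 0).
  { destruct (Rtotal_order alpha 0) as [Hn|[H0|Hp]]; [exfalso | exact H0 | exfalso].
    - destruct (hnp_cv (- alpha)) as [N HN]; [lra|].
      specialize (HN N (Nat.le_refl N)). unfold R_dist in HN. apply Rabs_def2 in HN.
      destruct (F N) as [Hy _]. lra.
    - set (delta := alpha / 2).
      destruct (hnp_cv delta) as [P1 HP1]; [unfold delta; lra|].
      assert (Hyd : forall p, (p >= P1)%nat -> delta < y p).
      { intros p Hp1. specialize (HP1 p Hp1). unfold R_dist in HP1. apply Rabs_def2 in HP1.
        unfold y, delta in *. lra. }
      set (rho := c1 * delta^3 / INR (k+1)).
      assert (rhopos : 0 < rho).
      { unfold rho. apply Rdiv_lt_0_compat; [|lra]. apply Rmult_lt_0_compat; [lra|].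
        apply pow_lt. unfold delta; lra. }
      set (q := 1 - rho / INR (k-1)).
      assert (Hq : forall p, (p >= P1)%nat -> xi (np p) <= q).
      { intros p Hp1. pose proof (Hyd p Hp1) as Hd.
        destruct (F p) as [Hy [Ht [HQ [Hs _]]]].
        destruct (hxi _ (hnp_gt p)) as [Hx _].
        fold (y p) in Hy, HQ, Hs.
        set (t := xi (np p) ^ (np p - k)) in *.
        set (s := xi (np p) ^ (k - 1)) in *.
        set (x := xi (np p)) in *.
        assert (Hs1 : 0 <= s <= 1) by (split; [apply pow_le; lra | apply pow_le1; lra]).
        assert (Hyy : 0 <= y p <= 1) by lra.
        destruct (HB1 (y p) Hyy) as [[A1 _] _]. fold c1 in A1.
        assert (Hd3 : delta^3 <= (y p)^3) by (apply pow_incr; unfold delta in *; lra).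
        assert (E1 : INR (k+1) * (1 - s) >= c1 * (y p)^3).
        { assert (INR (k+1) * t * (1 - s) <= INR (k+1) * (1 - s)).
          { rewrite Rmult_assoc. apply Rmult_le_compat_l; [lra|].
            rewrite <- (Rmult_1_l (1 - s)) at 2. apply Rmult_le_compat_r; lra. }
          assert (INR (k+1) * y p = INR (k+1) * t * s) by (rewrite Hs; ring). lra. }
        assert (E2 : rho <= 1 - s).
        { unfold rho. apply Rmult_le_reg_r with (INR (k+1)); [lra|].
          unfold Rdiv. rewrite Rmult_assoc, Rinv_l; [|lra].
          assert (c1 * delta^3 <= c1 * (y p)^3) by (apply Rmult_le_compat_l; lra). lra. }
        pose proof (bern (1 - x) (k-1)) as Hb.
        replace (1 - (1 - x)) with x in Hb by ring. fold s in Hb.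
        assert (rho / INR (k-1) <= 1 - x).
        { apply Rmult_le_reg_r with (INR (k-1)); [lra|].
          unfold Rdiv. rewrite Rmult_assoc, Rinv_l; [|lra]. lra. }
        unfold q. lra. }
      assert (qpos : 0 < q).
      { pose proof (Hq P1 (Nat.le_refl _)). destruct (hxi _ (hnp_gt P1)) as [Hx _]. lra. }
      assert (qlt1 : q < 1).
      { unfold q. assert (0 < rho / INR (k-1)) by (apply Rdiv_lt_0_compat; lra). lra. }
      destruct (pow_lt_1_zero q ltac:(rewrite Rabs_pos_eq; lra) delta ltac:(unfold delta; lra)) as [N HN].
      set (p := Nat.max P1 (S N)).
      assert (HpP : (p >= P1)%nat) by (unfold p; lia).
      assert (HpN : (np p - 1 >= N)%nat) by (pose proof (Hge p); unfold p in *; lia).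
      specialize (HN _ HpN). rewrite Rabs_pos_eq in HN by (apply pow_le; lra).
      assert (y p <= q ^ (np p - 1)).
      { unfold y. apply pow_incr. destruct (hxi _ (hnp_gt p)) as [Hx _]. split; [lra|]. apply Hq; exact HpP. }
      pose proof (Hyd p HpP). lra. }
  subst alpha.
  assert (hy0 : is_lim_seq y 0) by (apply is_lim_seq_Reals; exact hnp_cv).
  set (u := fun p => A (k+1) (y p) / (INR (k+1) * y p)).
  set (v := fun p => (A (k+2) (y p) / INR (k+2) - A (k+1) (y p) / INR (k+1)) / (y p)^3).
  set (c2 := cc (k+2)).
  set (Bc := K1 / INR (k+1) + K2 / INR (k+2)).
  assert (Bcpos1 : K1 / INR (k+1) <= Bc).
  { unfold Bc. assert (0 <= K2 / INR (k+2)) by (apply Rdiv_le_0_compat; lra). lra. }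
  assert (Bcpos2 : K2 / INR (k+2) <= Bc).
  { unfold Bc. assert (0 <= K1 / INR (k+1)) by (apply Rdiv_le_0_compat; lra). lra. }
  assert (Hc : c2 / INR (k+2) - c1 / INR (k+1) = INR k / 12).
  { unfold c1, c2, cc. rewrite !plus_INR. simpl INR. field. split; lra. }
  assert (Hu : forall p, 1 <= u p <= 1 + ((c1 + K1) / INR (k+1)) * (y p)^2).
  { intro p. destruct (F p) as [Hy _]. fold (y p) in Hy.
    assert (Hyy : 0 <= y p <= 1) by lra.
    destruct (HB1 (y p) Hyy) as [[A1 A2] _]. fold c1 in A1, A2.
    unfold u. apply div_bounds; [apply Rmult_lt_0_compat; lra|].
    assert (0 <= (y p)^3) by (apply pow_le; lra).
    assert ((y p)^5 <= (y p)^3).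
    { replace ((y p)^5) with ((y p)^3 * ((y p) * (y p))) by ring.
      assert (y p * y p <= 1) by nra. nra. }
    replace ((1 + (c1 + K1) / INR (k+1) * (y p)^2) * (INR (k+1) * y p))
      with (INR (k+1) * y p + (c1 + K1) * (y p)^3) by (field; lra).
    split; [|nra]. assert (0 <= c1 * (y p)^3) by (apply Rmult_le_pos; lra). lra. }
  assert (Hv : forall p, INR k / 12 + (- Bc) * (y p)^2 <= v p <= INR k / 12 + Bc * (y p)^2).
  { intro p. destruct (F p) as [Hy _]. fold (y p) in Hy.
    assert (Hyy : 0 <= y p <= 1) by lra.
    destruct (HB1 (y p) Hyy) as [[A1 A2] _]. fold c1 in A1, A2.
    destruct (HB2 (y p) Hyy) as [[A3 A4] _]. fold c2 in A3, A4.
    assert (D1 : y p + c1 / INR (k+1) * (y p)^3 <= A (k+1) (y p) / INR (k+1) <=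
                 y p + c1 / INR (k+1) * (y p)^3 + K1 / INR (k+1) * (y p)^5).
    { apply div_bounds; [lra|].
      replace ((y p + c1 / INR (k+1) * (y p)^3) * INR (k+1)) with (INR (k+1) * y p + c1 * (y p)^3) by (field; lra).
      replace ((y p + c1 / INR (k+1) * (y p)^3 + K1 / INR (k+1) * (y p)^5) * INR (k+1))
        with (INR (k+1) * y p + c1 * (y p)^3 + K1 * (y p)^5) by (field; lra). lra. }
    assert (D2 : y p + c2 / INR (k+2) * (y p)^3 <= A (k+2) (y p) / INR (k+2) <=
                 y p + c2 / INR (k+2) * (y p)^3 + K2 / INR (k+2) * (y p)^5).
    { apply div_bounds; [lra|].
      replace ((y p + c2 / INR (k+2) * (y p)^3) * INR (k+2)) with (INR (k+2) * y p + c2 * (y p)^3) by (field; lra).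
      replace ((y p + c2 / INR (k+2) * (y p)^3 + K2 / INR (k+2) * (y p)^5) * INR (k+2))
        with (INR (k+2) * y p + c2 * (y p)^3 + K2 * (y p)^5) by (field; lra). lra. }
    unfold v. apply div_bounds; [apply pow_lt; lra|].
    assert (Y5 : 0 <= (y p)^5) by (apply pow_le; lra).
    pose proof (Rmult_le_compat_r _ _ _ Y5 Bcpos1).
    pose proof (Rmult_le_compat_r _ _ _ Y5 Bcpos2).
    replace ((INR k / 12 + - Bc * (y p)^2) * (y p)^3) with (INR k / 12 * (y p)^3 - Bc * (y p)^5) by ring.
    replace ((INR k / 12 + Bc * (y p)^2) * (y p)^3) with (INR k / 12 * (y p)^3 + Bc * (y p)^5) by ring.
    rewrite <- Hc.
    replace ((c2 / INR (k + 2) - c1 / INR (k + 1)) * y p ^ 3) with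
      (c2 / INR (k + 2) * y p ^ 3 - c1 / INR (k + 1) * y p ^ 3) by ring.
    lra. }
  assert (lu : is_lim_seq u 1).
  { apply is_lim_seq_le_le with (u := fun _ => 1) (w := fun p => 1 + ((c1 + K1) / INR (k+1)) * (y p)^2).
    - exact Hu.
    - apply is_lim_seq_const.
    - apply lim_quad; exact hy0. }
  assert (lv : is_lim_seq v (INR k / 12)).
  { apply is_lim_seq_le_le with (u := fun p => INR k / 12 + (- Bc) * (y p)^2) (w := fun p => INR k / 12 + Bc * (y p)^2).
    - exact Hv.
    - apply lim_quad; exact hy0.
    - apply lim_quad; exact hy0. }
  exists (12 / INR k). split.
  - apply is_lim_seq_Reals.
    apply is_lim_seq_ext with (u := fun p => u p / v p).
    + intro p. destruct (F p) as [_ [_ [_ [_ HC]]]]. rewrite HC. reflexivity.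
    + eapply is_lim_seq_div; [exact lu | exact lv | |].
      * intro E. injection E. lra.
      * unfold is_Rbar_div, is_Rbar_mult; simpl. f_equal. f_equal. field. lra.
  - split.
    + apply Rdiv_lt_0_compat; lra.
    + apply Rmult_le_reg_r with (INR k); [lra|]. unfold Rdiv. rewrite Rmult_assoc, Rinv_l; lra.
Qed.
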